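(* Let $p$ be an odd prime and $m=p-1$. For $b,b'\in\{0,\ldots,p-1\}$ with $b\ne b'$, if $b+b'=(p-1)/2$ or $b+b'=(3p-1)/2$, then $r_{ave}(\tilde E_b)=r_{ave}(\tilde E_{b'})$.
   Context: $h=(1,\ldots,m)$; $D_0$ is the $p\times m$ matrix whose $i$th row is $i\,h\pmod p$, $i=1,\ldots,p$. The Williams transformation on $\{0,\ldots,p-1\}$ is $W(x)=2x$ for $0\le x<p/2$ and $W(x)=2(p-x)-1$ for $p/2\le x\le p-1$. $D_b=D_0+b\pmod p$, $E_b=W(D_b)$ entrywise, and $\tilde E_b$ is obtained from $E_b$ by deleting its last row (which is $(W(b),\ldots,W(b))$) and replacing each entry $x$ by $x+1$ if $x<W(b)$ and by $x$ if $x>W(b)$. For an $m$-column matrix $O$, $r_{ave}(O)=\sum_{u\ne v}|r_{uv}(O)|/\{m(m-1)\}$ with $r_{uv}(O)$ the Pearson correlation between columns $u$ and $v$. *)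

(* Defs.v *)
From mathcomp Require Import all_boot all_order all_algebra.
Set Implicit Arguments. Unset Strict Implicit. Unset Printing Implicit Defensive.
Import Order.TTheory GRing.Theory Num.Theory.

Definition williams (p x : nat) : nat :=
  if (x.*2 < p)%N then x.*2 else ((p - x).*2 - 1)%N.

Definition Dentry (p b i j : nat) : nat := ((i * j + b) %% p)%N.

Definition Eentry (p b i j : nat) : nat := williams p (Dentry p b i j).

(* tilde E_b, with m = p-1 columns: delete the last row (i = p) of E_b,
   i.e. keep rows i = 1..p-1, and map x to x+1 if x < W(b), to x otherwise
   (the entries of the kept rows never equal W(b)).  Row index i : 'I_(p-1)
   stands for row i+1 of E_b, column index j : 'I_(p-1) for column j+1. *)
Definition tildeE_nat (p b : nat) : 'M[nat]_(p.-1, p.-1) :=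
  \matrix_(i < p.-1, j < p.-1)
    let x := Eentry p b i.+1 j.+1 in
    if (x < williams p b)%N then x.+1 else x.

Definition tildeE (R : rcfType) (p b : nat) : 'M[R]_(p.-1, p.-1) :=
  map_mx (fun x : nat => (x%:R : R)%R) (tildeE_nat p b).

Local Open Scope ring_scope.

Definition col_mean (R : rcfType) (n m : nat) (O : 'M[R]_(n, m)) (u : 'I_m) : R :=
  (\sum_(i < n) O i u) / n%:R.

Definition pearson (R : rcfType) (n m : nat) (O : 'M[R]_(n, m)) (u v : 'I_m) : R :=
  (\sum_(i < n) (O i u - col_mean O u) * (O i v - col_mean O v)) /
  (Num.sqrt (\sum_(i < n) (O i u - col_mean O u) ^+ 2) *
   Num.sqrt (\sum_(i < n) (O i v - col_mean O v) ^+ 2)).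

Definition r_ave (R : rcfType) (n m : nat) (O : 'M[R]_(n, m)) : R :=
  (\sum_(u < m) \sum_(v < m | u != v) `|pearson O u v|) / (m * (m - 1))%:R.

(* Main.v *)
Require Import Defs.
From mathcomp Require Import all_boot all_order all_algebra.
From mathcomp Require Import zify ring.
Set Implicit Arguments. Unset Strict Implicit.
Import Order.TTheory GRing.Theory Num.Theory.

Lemma will_lt p x : (x < p)%N -> (williams p x < p)%N.
Proof. move=> Hx; rewrite /williams; case: ifP => H1; lia. Qed.

Lemma will_inj p x y : (x < p)%N -> (y < p)%N -> williams p x = williams p y -> x = y.
Proof. move=> Hx Hy; rewrite /williams; case: ifP => H1; case: ifP => H2; lia. Qed.

Lemma will_comp p d d' : odd p -> (d < p)%N -> (d' < p)%N ->
  (d + d' = (p-1)./2 \/ d + d' = (p-1)./2 + p)%N ->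
  williams p d' = (p - 1 - williams p d)%N.
Proof. move=> Ho Hd Hd' H; rewrite /williams; case: ifP => H1; case: ifP => H2; lia. Qed.

Lemma sum_cases p x y : (0 < p)%N -> (x < p)%N -> (y < p)%N -> (x + y) %% p = ((p-1)./2) %% p ->
  ((p-1)./2 < p)%N -> (x + y = (p-1)./2 \/ x + y = (p-1)./2 + p)%N.
Proof.
move=> Hp Hx Hy H Hh.
have E := divn_eq (x + y) p.
rewrite H (modn_small Hh) in E.
have : ((x + y) %/ p < 2)%N.
  by rewrite ltn_divLR //; lia.
case: ((x+y) %/ p) E => [|[|k]] E _; lia.
Qed.

Lemma D_neq p b a c : prime p -> (0 < a < p)%N -> (0 < c < p)%N -> (b < p)%N ->
  Dentry p b a c != b.
Proof.
move=> Pp Ha Hc Hb; rewrite /Dentry; apply/eqP => E.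
have : (a * c + b == 0 + b %[mod p]) by rewrite E add0n modn_small.
rewrite eqn_modDr mod0n -/(dvdn p (a*c)) Euclid_dvdM //.
case/orP => /dvdn_leq; lia.
Qed.

Lemma D_sum p b b' a c : (0 < p)%N -> (c <= p)%N ->
  (Dentry p b a (p - c) + Dentry p b' a c) %% p = (b + b') %% p.
Proof.
move=> Hp Hc; rewrite /Dentry modnDm.
have -> : (a * (p - c) + b + (a * c + b') = (b + b') + a * p)%N.
  by rewrite mulnBr; have := leq_mul (leqnn a) Hc; lia.
by rewrite -modnDmr modnMl addn0.
Qed.

Lemma tilde_nat p b b' (i j : 'I_p.-1) : prime p -> odd p -> (b < p)%N -> (b' < p)%N ->
  (b + b' = (p - 1)./2 \/ b + b' = (3 * p - 1)./2)%N ->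
  (tildeE_nat p b' i j + tildeE_nat p b i (rev_ord j) = p)%N.
Proof.
move=> Pp Ho Hb Hb' Hbb.
have p2 := prime_gt1 Pp.
have Hi := ltn_ord i; have Hj := ltn_ord j.
rewrite !mxE /=.
have -> : (p.-1 - j.+1).+1 = p - j.+1 by lia.
rewrite /Eentry.
have Hbb2 : (b + b' = (p-1)./2 \/ b + b' = (p-1)./2 + p)%N by lia.
set D := Dentry p b i.+1 (p - j.+1).
set D' := Dentry p b' i.+1 j.+1.
have HD : (D < p)%N by rewrite /D /Dentry ltn_pmod //; lia.
have HD' : (D' < p)%N by rewrite /D' /Dentry ltn_pmod //; lia.
have HDD : (D + D' = (p-1)./2 \/ D + D' = (p-1)./2 + p)%N.
  apply: sum_cases => //; try lia.
  rewrite /D /D' D_sum; try lia.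
  case: Hbb2 => -> //. by rewrite modnDr.
have W1 := will_comp Ho HD HD' HDD.
have W2 := will_comp Ho Hb Hb' Hbb2.
have Hn : D != b by apply: D_neq => //; lia.
have W3 : williams p D != williams p b.
  by apply/eqP => /will_inj E; move/eqP: Hn; apply; apply: E.
have W4 := will_lt HD. have W5 := will_lt Hb.
rewrite W1 W2.
move: W3 W4 W5; set x := williams p D; set y := williams p b => W3 W4 W5.
move/eqP: W3 => W3.
case: ifP => H1; case: ifP => H2; lia.
Qed.
Local Open Scope ring_scope.

Lemma pearson_rev (R : rcfType) n m (O O' : 'M[R]_(n,m)) (c : R) :
  (forall i j, O' i j = c - O i (rev_ord j)) -> n%:R != 0 :> R ->
  forall u v, pearson O' u v = pearson O (rev_ord u) (rev_ord v).
Proof.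
move=> HO Hn.
have Hm u : col_mean O' u = c - col_mean O (rev_ord u).
  rewrite /col_mean (eq_bigr _ (fun i _ => HO i u)) sumrB sumr_const card_ord.
  by rewrite mulrBl -[c *+ n]mulr_natr mulfK.
have Hd i u : O' i u - col_mean O' u = - (O i (rev_ord u) - col_mean O (rev_ord u)).
  by rewrite HO Hm; ring.
move=> u v; rewrite /pearson.
congr (_ / (Num.sqrt _ * Num.sqrt _)).
- by apply: eq_bigr => i _; rewrite !Hd mulrNN.
- by apply: eq_bigr => i _; rewrite Hd sqrrN.
- by apply: eq_bigr => i _; rewrite Hd sqrrN.
Qed.

Lemma r_ave_rev (R : rcfType) n m (O O' : 'M[R]_(n,m)) (c : R) :
  (forall i j, O' i j = c - O i (rev_ord j)) -> n%:R != 0 :> R ->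
  r_ave O' = r_ave O.
Proof.
move=> HO Hn; rewrite /r_ave; congr (_ / _).
rewrite [RHS](reindex_inj rev_ord_inj); apply: eq_bigr => u _.
rewrite [RHS](reindex_inj rev_ord_inj) /=.
apply: eq_big => v; first by rewrite (inj_eq rev_ord_inj).
by move=> _; rewrite (pearson_rev HO Hn).
Qed.

Theorem proposition1 (R : rcfType) (p b b' : nat) :
  prime p -> odd p -> (b < p)%N -> (b' < p)%N -> b != b' ->
  (b + b' = (p - 1)./2 \/ b + b' = (3 * p - 1)./2)%N ->
  r_ave (tildeE R p b) = r_ave (tildeE R p b').
Proof.
move=> Pp Ho Hb Hb' _ Hbb.
symmetry; apply: (@r_ave_rev R _ _ _ _ (p%:R)).
  move=> i j; move: (tilde_nat i j Pp Ho Hb Hb' Hbb); rewrite !mxE => E.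
  by apply/eqP; rewrite eq_sym subr_eq -natrD E.
rewrite pnatr_eq0; have := prime_gt1 Pp; lia.
Qed.
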